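(* Let $G$ be a graph with $n$ vertices and $\chi(G)>3$. Then $W(G)\le\min\{3\,\alpha(G),\ n-\alpha(G)\}+1$.
   Context: $\chi(G)$ is the chromatic number and $\alpha(G)$ the independence number (maximum size of a set of pairwise non-adjacent vertices) of $G$; $K_3$ is the complete graph on 3 vertices. Graphs are viewed as structures with an adjacency relation $E$ and equality. For a graph $G$ with $\chi(G)>3$, $W(G)$ is the least $k$ such that some existential-positive first-order sentence (built from atomic formulas $x=y$, $E(x,y)$ using only $\wedge$, $\vee$ and $\exists$) in which at most $k$ distinct variables occur is true in $G$ and false in $K_3$. Equivalently, $W(G)$ is the least $k$ such that for some $r$ Spoiler has a winning strategy in the $r$-round $k$-width 3-coloring game on $G$: in each round Spoiler may erase the colors of some colored vertices and then selects a vertex, which Duplicator colors red, blue or green; at most $k$ vertices may be colored after each round; Duplicator wins if after every round the partial coloring is proper (no two adjacent colored vertices have the same color). *)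

(* Defs.v *)
From mathcomp Require Import all_boot.
Set Implicit Arguments. Unset Strict Implicit. Unset Printing Implicit Defensive.

Record graph := Graph {
  vert :> finType;
  adj : rel vert;
  adj_sym : symmetric adj;
  adj_irr : irreflexive adj }.

Definition colorable (G : graph) (k : nat) : bool :=
  [exists f : {ffun G -> 'I_k}, [forall x, forall y, adj x y ==> (f x != f y)]].

Lemma colorable_exists (G : graph) : exists k, colorable G k.
Proof.
exists #|G|; apply/existsP; exists [ffun x => enum_rank x].
apply/forallP=> x; apply/forallP=> y; apply/implyP=> Hxy.
rewrite !ffunE; apply/negP=> /eqP /enum_rank_inj Exy.
by move: Hxy; rewrite Exy adj_irr.
Qed.

Definition chromatic_number (G : graph) : nat := ex_minn (colorable_exists G).

Definition independent (G : graph) (S : {set G}) : bool :=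
  [forall x in S, forall y in S, ~~ adj x y].

Definition independence_number (G : graph) : nat :=
  \max_(S : {set G} | independent S) #|S|.

(* Existential-positive first-order formulas over the signature {E}, with
   variables indexed by nat; atoms x = y and E(x,y); connectives /\, \/, exists. *)
Inductive epf : Type :=
  | EPEq  : nat -> nat -> epf
  | EPAdj : nat -> nat -> epf
  | EPAnd : epf -> epf -> epf
  | EPOr  : epf -> epf -> epf
  | EPEx  : nat -> epf -> epf.

Fixpoint ep_vars (f : epf) : seq nat :=
  match f with
  | EPEq i j | EPAdj i j => [:: i; j]
  | EPAnd f1 f2 | EPOr f1 f2 => ep_vars f1 ++ ep_vars f2
  | EPEx i f1 => i :: ep_vars f1
  end.

Definition ep_nvars (f : epf) : nat := size (undup (ep_vars f)).

Fixpoint ep_free (f : epf) : seq nat :=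
  match f with
  | EPEq i j | EPAdj i j => [:: i; j]
  | EPAnd f1 f2 | EPOr f1 f2 => ep_free f1 ++ ep_free f2
  | EPEx i f1 => filter (fun j => j != i) (ep_free f1)
  end.

Definition ep_sentence (f : epf) : bool := nilp (ep_free f).

Definition upd (T : Type) (env : nat -> T) (i : nat) (a : T) : nat -> T :=
  fun j => if j == i then a else env j.

Fixpoint ep_sat (T : Type) (R : T -> T -> bool) (env : nat -> T) (f : epf) : Prop :=
  match f with
  | EPEq i j => env i = env j
  | EPAdj i j => R (env i) (env j)
  | EPAnd f1 f2 => ep_sat R env f1 /\ ep_sat R env f2
  | EPOr f1 f2 => ep_sat R env f1 \/ ep_sat R env f2
  | EPEx i f1 => exists a : T, ep_sat R (upd env i a) f1
  end.

Definition K3_adj : rel 'I_3 := fun x y => x != y.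

(* Some EP sentence with at most k distinct variables is true in G and false in K3;
   W(G) is the least k for which this holds. *)
Definition W_witness (G : graph) (k : nat) : Prop :=
  exists phi : epf,
    [/\ ep_sentence phi, ep_nvars phi <= k,
        (forall env : nat -> G, ep_sat (@adj G) env phi) &
        (forall env : nat -> 'I_3, ~ ep_sat K3_adj env phi)].

(* Main.v *)
Require Import Defs.
From mathcomp Require Import all_boot.
From mathcomp Require Import zify.

Set Implicit Arguments. Unset Strict Implicit. Unset Printing Implicit Defensive.

Definition Tt : epf := EPEx 0 (EPEq 0 0).
Definition andl (fs : seq epf) : epf := foldr EPAnd Tt fs.

Lemma sat_Tt (T : Type) (R : T -> T -> bool) env : ep_sat R env Tt.
Proof. by exists (env 0). Qed.

Lemma sat_andl (T : Type) (R : T -> T -> bool) env (A : eqType) (F : A -> epf) s :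
  ep_sat R env (andl (map F s)) <-> (forall a, a \in s -> ep_sat R env (F a)).
Proof.
elim: s => [|x s IH] /=; first by split=> // _; apply: sat_Tt.
split.
  move=> [H1 /IH H2] a; rewrite inE => /orP [/eqP -> //|]; exact: H2.
move=> H; split; first by apply: H; rewrite mem_head.
by apply/IH => a Ha; apply: H; rewrite inE Ha orbT.
Qed.

Lemma free_andl (A : eqType) (F : A -> epf) s (L : seq nat) :
  (forall a, a \in s -> {subset ep_free (F a) <= L}) ->
  {subset ep_free (andl (map F s)) <= L}.
Proof.
elim: s => [|x s IH] /= H j; first by [].
rewrite mem_cat => /orP [Hj|Hj].
  by apply: (H x) => //; rewrite mem_head.
by apply: IH Hj => a Ha; apply: H; rewrite inE Ha orbT.
Qed.

Lemma vars_andl (A : eqType) (F : A -> epf) s (L : seq nat) :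
  0 \in L ->
  (forall a, a \in s -> {subset ep_vars (F a) <= L}) ->
  {subset ep_vars (andl (map F s)) <= L}.
Proof.
move=> H0; elim: s => [|x s IH] /= H j.
  by rewrite !inE => /or3P [] /eqP ->.
rewrite mem_cat => /orP [Hj|Hj].
  by apply: (H x) => //; rewrite mem_head.
by apply: IH Hj => a Ha; apply: H; rewrite inE Ha orbT.
Qed.

Section Constr.
Variable G : graph.

Definition idx (u : G) : nat := (enum_rank u).+1.

Lemma idx_inj : injective idx.
Proof. by move=> u v [] /val_inj /enum_rank_inj. Qed.

Definition wrap (xs : seq G) (body : epf) : epf :=
  foldr (fun u f => EPEx (idx u) f) body xs.

Lemma free_wrap xs body (L : seq nat) :
  {subset ep_free body <= map idx xs ++ L} -> {subset ep_free (wrap xs body) <= L}.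
Proof.
elim: xs L => [|u xs IH] L /= H j; first exact: H.
rewrite mem_filter => /andP [Hju Hj].
have HL : {subset ep_free body <= map idx xs ++ idx u :: L}.
  move=> i /H; rewrite /= !inE !mem_cat !inE.
  by case: (i == idx u); case: (i \in map idx xs); case: (i \in L).
by have := IH (idx u :: L) HL j Hj; rewrite inE (negbTE Hju).
Qed.

Lemma vars_wrap xs body (L : seq nat) :
  {subset map idx xs <= L} -> {subset ep_vars body <= L} ->
  {subset ep_vars (wrap xs body) <= L}.
Proof.
elim: xs => [|u xs IH] /= H1 H2 j; first exact: H2.
rewrite inE => /orP [/eqP ->|Hj]; first by apply: H1; rewrite mem_head.
apply: IH Hj => // i Hi; apply: H1; by rewrite inE Hi orbT.
Qed.

Lemma sat_wrap_G xs body :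
  forall env : nat -> G,
  (forall env', (forall u, u \in xs -> env' (idx u) = u) ->
     (forall j, j \notin map idx xs -> env' j = env j) -> ep_sat (@adj G) env' body) ->
  ep_sat (@adj G) env (wrap xs body).
Proof.
elim: xs => [|u xs IH] env H /=; first by apply: H.
exists u; apply: IH => env' H1 H2; apply: H => [w|j].
  rewrite inE => /orP [/eqP ->|]; last exact: H1.
  case Hm: (idx u \in map idx xs).
    by move: Hm => /mapP [w0 Hw0 /idx_inj ->]; apply: H1.
  by rewrite H2 ?Hm // /upd eqxx.
rewrite /= inE negb_or => /andP [Hj1 Hj2].
by rewrite H2 // /upd (negbTE Hj1).
Qed.

Lemma sat_wrap_K3 xs body (env : nat -> 'I_3) :
  ep_sat K3_adj env (wrap xs body) -> exists env', ep_sat K3_adj env' body.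
Proof.
elim: xs env => [|u xs IH] env /=; first by move=> H; exists env.
by move=> [a /IH].
Qed.

Variable X : {set G}.

Definition pairF (u v : G) : epf := if adj u v then EPAdj (idx u) (idx v) else Tt.
Definition nbrF (v : G) : epf :=
  EPEx 0 (andl (map (fun u => if adj v u then EPAdj 0 (idx u) else Tt) (enum X))).
Definition body : epf :=
  EPAnd (andl (map (fun u => andl (map (fun v => pairF u v) (enum X))) (enum X)))
        (andl (map nbrF (enum (~: X)))).
Definition phi : epf := wrap (enum X) body.

Lemma phi_sentence : ep_sentence phi.
Proof.
rewrite /ep_sentence.
have H : {subset ep_free phi <= [::]}.
  apply: free_wrap; rewrite cats0 => j /=; rewrite mem_cat => /orP [].
    apply: free_andl => u Hu; apply: free_andl => v Hv i; rewrite /pairF.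
    case: (adj u v) => //=.
    by rewrite !inE => /orP [] /eqP ->; apply: map_f.
  apply: free_andl => v _ i /=; rewrite mem_filter => /andP [Hi0].
  have : {subset ep_free (andl (map (fun u => if adj v u then EPAdj 0 (idx u) else Tt) (enum X))) <= 0 :: map idx (enum X)}.
    apply: free_andl => u Hu k; case: (adj v u) => //=.
    rewrite !inE => /orP [] /eqP ->; first by rewrite eqxx.
    by rewrite map_f ?orbT.
  by move=> Hs /Hs; rewrite inE (negbTE Hi0).
by case: (ep_free phi) H => // x s /(_ x); rewrite mem_head => /(_ isT).
Qed.

Lemma phi_nvars : ep_nvars phi <= #|X| + 1.
Proof.
rewrite /ep_nvars.
have Hs : {subset undup (ep_vars phi) <= 0 :: map idx (enum X)}.
  move=> j; rewrite mem_undup; move: j; apply: vars_wrap.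
    by move=> j Hj; rewrite inE Hj orbT.
  have H0 : 0 \in 0 :: map idx (enum X) by rewrite mem_head.
  move=> j /=; rewrite mem_cat => /orP [].
    apply: vars_andl => // u Hu; apply: vars_andl => // v Hv i; rewrite /pairF.
    case: (adj u v) => /=; last by rewrite !inE => /or3P [] /eqP ->.
    by rewrite !inE => /orP [] /eqP ->; rewrite map_f ?orbT.
  apply: vars_andl => // v _ i /=; rewrite inE => /orP [/eqP -> //|].
  apply: vars_andl => // u Hu k; case: (adj v u) => /=;
    last by rewrite !inE => /or3P [] /eqP ->.
  by rewrite !inE => /orP [] /eqP ->; rewrite ?eqxx // map_f ?orbT.
have := uniq_leq_size (undup_uniq _) Hs.
by rewrite /= size_map -cardE addn1.
Qed.

Lemma phi_G env : ep_sat (@adj G) env phi.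
Proof.
apply: sat_wrap_G => env' H1 _; split.
  apply/sat_andl => u Hu; apply/sat_andl => v Hv; rewrite /pairF.
  case Huv: (adj u v); last exact: sat_Tt.
  by rewrite /= !H1.
apply/sat_andl => v Hv; exists v; apply/sat_andl => u Hu.
case Hvu: (adj v u); last exact: sat_Tt.
by rewrite /= /upd eqxx /idx /= H1.
Qed.

Lemma phi_K3 env : ep_sat K3_adj env phi ->
  exists c : G -> 'I_3, forall x y, x \in X -> adj x y -> c x != c y.
Proof.
move/sat_wrap_K3 => [env' [Hp Hn]].
pose c x := if x \in X then env' (idx x)
  else odflt ord0 [pick a : 'I_3 | [forall u in X, adj x u ==> (a != env' (idx u))]].
exists c => x y Hx Hxy; rewrite /c Hx.
case Hy: (y \in X).
  move/sat_andl: Hp => /(_ x); rewrite mem_enum => /(_ Hx) /sat_andl /(_ y).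
  by rewrite mem_enum => /(_ Hy); rewrite /pairF Hxy.
case: pickP => [a /forallP /(_ x)|].
  by rewrite Hx adj_sym Hxy /= eq_sym.
move/sat_andl: Hn => /(_ y); rewrite mem_enum inE Hy => /(_ isT) [a Ha] /(_ a).
move/negbT/negP; case; apply/forallP => u; apply/implyP => Hu; apply/implyP => Hyu.
move/sat_andl: Ha => /(_ u); rewrite mem_enum Hu Hyu => /(_ isT).
by rewrite /= /K3_adj /upd eqxx.
Qed.

End Constr.

Lemma max_indep (G : graph) : exists I : {set G}, independent I /\ #|I| = independence_number G.
Proof.
have H0 : independent (set0 : {set G}) by apply/forallP => x; rewrite inE.
rewrite /independence_number (bigmax_eq_arg _ H0).
case: arg_maxnP => // I HI _; by exists I.
Qed.

Lemma chi_le3 (G : graph) : colorable G 3 -> chromatic_number G <= 3.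
Proof. by rewrite /chromatic_number => H; case: ex_minnP => m _ /(_ _ H). Qed.

Lemma witness_of (G : graph) (X : {set G}) :
  (forall c : G -> 'I_3, ~ (forall x y, x \in X -> adj x y -> c x != c y)) ->
  W_witness G (#|X| + 1).
Proof.
move=> Hc; exists (phi X); split.
- exact: phi_sentence.
- exact: phi_nvars.
- exact: phi_G.
- by move=> env /phi_K3 [c Hc']; apply: (Hc c).
Qed.

Lemma case1 (G : graph) (I : {set G}) : independent I -> 3 < chromatic_number G ->
  forall c : G -> 'I_3, ~ (forall x y, x \in ~: I -> adj x y -> c x != c y).
Proof.
move=> HI hchi c Hc; suff : chromatic_number G <= 3 by rewrite leqNgt hchi.
apply: chi_le3; apply/existsP; exists [ffun x => c x].
apply/forallP => x; apply/forallP => y; apply/implyP => Hxy; rewrite !ffunE.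
case Hx: (x \in I); last by apply: Hc; rewrite // inE Hx.
case Hy: (y \in I); last by rewrite eq_sym; apply: Hc; rewrite ?inE ?Hy // adj_sym.
by move/forallP: HI => /(_ x); rewrite Hx => /forallP /(_ y); rewrite Hy Hxy.
Qed.

Lemma case2 (G : graph) (X : {set G}) (v : G) : v \notin X ->
  #|X| = 3 * independence_number G ->
  forall c : G -> 'I_3, ~ (forall x y, x \in X -> adj x y -> c x != c y).
Proof.
move=> Hv HX c Hc.
pose Y := v |: X.
pose S (i : 'I_3) := [set y in Y | c y == i].
have HS i : #|S i| <= independence_number G.
  rewrite /independence_number; apply: leq_bigmax_cond.
  apply/forallP => x; apply/implyP; rewrite inE => /andP [Hx /eqP Hcx].
  apply/forallP => y; apply/implyP; rewrite inE => /andP [Hy /eqP Hcy].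
  apply/negP => Hxy.
  case HxX: (x \in X).
    by move: (Hc _ _ HxX Hxy); rewrite Hcx Hcy eqxx.
  case HyX: (y \in X).
    by move: (Hc y x HyX); rewrite adj_sym Hxy Hcx Hcy eqxx => /(_ isT).
  move: Hx Hy; rewrite !inE HxX HyX !orbF => /eqP Ex /eqP Ey.
  by move: Hxy; rewrite Ex Ey adj_irr.
have HY : #|Y| = #|X| + 1 by rewrite cardsU1 Hv addnC.
have Hsub : Y \subset S ord0 :|: S (inord 1) :|: S (inord 2).
  apply/subsetP => y Hy; rewrite !inE; move: Hy; rewrite !inE => -> /=.
  case: (c y) => [[|[|[|k]]] Hk] //=.
  - by rewrite -val_eqE /= inordK.
  - by rewrite orbC -val_eqE /= inordK.
have := subset_leq_card Hsub.
have := HS ord0; have := HS (inord 1); have := HS (inord 2).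
rewrite HY HX !cardsU; lia.
Qed.

Lemma subset_card (T : finType) m : m <= #|T| -> exists X : {set T}, #|X| = m.
Proof.
move=> Hm; exists [set x in take m (enum T)].
rewrite cardsE (card_uniqP (take_uniq _ (enum_uniq _))).
by rewrite size_takel // -cardE.
Qed.

(* W(G) <= m  is expressed as: some k <= m has the defining property of W(G)
   (W(G) being the least such k). *)
Theorem theorem2 (G : graph) (hchi : 3 < chromatic_number G) :
  exists k, k <= minn (3 * independence_number G) (#|G| - independence_number G) + 1
            /\ W_witness G k.
Proof.
have [I [HI HIa]] := max_indep G.
case: (leqP (#|G| - independence_number G) (3 * independence_number G)) => Hc.
  exists (#|~: I| + 1); split; last by apply: witness_of; apply: case1.
  have := cardsC I; rewrite HIa => E.
  lia.
have [X HX] : exists X : {set G}, #|X| = 3 * independence_number G.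
  by apply: subset_card; lia.
have [v Hv] : exists v, v \in ~: X.
  apply/set0Pn; rewrite -card_gt0 cardsCs setCK; lia.
exists (#|X| + 1); split; last first.
  by apply: witness_of; apply: (@case2 _ _ v) => //; rewrite inE in Hv.
lia.
Qed.
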